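(* For $m \geq 3$, a fan-crossing free $m$-star has at most $3m-8$ arrows, and this bound is attained only for $m=3$ (for $m \geq 4$ there are at most $3m-9$ arrows).
   Context: An $m$-star is a regular $m$-gon $P$ together with a finite set of arrows. Label the vertices of $P$ counter-clockwise $v_1,\dots,v_m$ and let $e_i = v_iv_{i+1}$ (indices modulo $m$) be its boundary edges. An arrow is a ray segment starting at a vertex $v_i$ of $P$, pointing into the interior of $P$, and ending where it exits $P$ through (the relative interior of) a boundary edge $e_j$ not incident to $v_i$; several arrows may start at the same vertex. Two elements among the boundary edges and arrows intersect if they share a point other than a common endpoint vertex; in particular an arrow intersects the edge through which it exits. An element is incident to a vertex $v$ if $v$ is one of its endpoints (an arrow is incident only to its starting vertex). The $m$-star is ($2$-)fan-crossing free if no edge or arrow intersects two elements (arrows or edges) that are incident to the same vertex. *)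

(* Defs.v *)
From Stdlib Require Import Reals List Arith.
Import ListNotations.
Open Scope R_scope.

Definition point : Type := (R * R)%type.

(* Vertex v_k of the regular m-gon inscribed in the unit circle, labelled
   counter-clockwise (indices are taken modulo m: vtx m m = vtx m 0). *)
Definition vtx (m k : nat) : point :=
  (cos (2 * PI * INR k / INR m), sin (2 * PI * INR k / INR m)).

Definition lerp (a b : point) (s : R) : point :=
  ((1 - s) * fst a + s * fst b, (1 - s) * snd a + s * snd b).

Definition on_seg (a b q : point) : Prop :=
  exists s, 0 <= s <= 1 /\ q = lerp a b s.

(* An arrow: starts at vertex v_src, exits through (the relative interior of)
   edge e_edge = v_edge v_(edge+1) at the point with parameter par in (0,1). *)
Record arrow : Type := Arrow { a_src : nat; a_edge : nat; a_par : R }.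

Definition valid_arrow (m : nat) (a : arrow) : Prop :=
  (a_src a < m)%nat /\ (a_edge a < m)%nat /\
  a_src a <> a_edge a /\ a_src a <> Nat.modulo (S (a_edge a)) m /\
  0 < a_par a < 1.

Definition arrow_end (m : nat) (a : arrow) : point :=
  lerp (vtx m (a_edge a)) (vtx m (S (a_edge a))) (a_par a).

Definition is_star (m : nat) (A : list arrow) : Prop :=
  Forall (valid_arrow m) A /\ NoDup A.

Inductive elem : Type := EEdge (j : nat) | EArrow (a : arrow).

Definition elem_in (m : nat) (A : list arrow) (x : elem) : Prop :=
  match x with
  | EEdge j => (j < m)%nat
  | EArrow a => In a A
  end.

Definition on_elem (m : nat) (x : elem) (q : point) : Prop :=
  match x with
  | EEdge j => on_seg (vtx m j) (vtx m (S j)) q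
  | EArrow a => on_seg (vtx m (a_src a)) (arrow_end m a) q
  end.

Definition incident (m : nat) (x : elem) (k : nat) : Prop :=
  match x with
  | EEdge j => k = j \/ k = Nat.modulo (S j) m
  | EArrow a => k = a_src a
  end.

Definition intersects (m : nat) (x y : elem) : Prop :=
  exists q, on_elem m x q /\ on_elem m y q /\
    ~ (exists k, (k < m)%nat /\ incident m x k /\ incident m y k /\ q = vtx m k).

Definition fan_crossing_free (m : nat) (A : list arrow) : Prop :=
  forall (x y z : elem) (k : nat),
    elem_in m A x -> elem_in m A y -> elem_in m A z ->
    x <> y -> x <> z -> y <> z ->
    (k < m)%nat -> incident m y k -> incident m z k ->
    intersects m x y -> intersects m x z -> False.

(* Main.v *)
Require Import Defs.
From Stdlib Require Import Reals List Arith.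
From Stdlib Require Import Lra Lia Bool Classical.
Import ListNotations.
Open Scope nat_scope.

Definition btw (a b c : nat) : Prop := (a < b < c) \/ (b < c < a) \/ (c < a < b).
Definition bt (d : bool) (a b c : nat) : Prop := if d then btw a b c else btw c b a.
Definition btwb (a b c : nat) : bool :=
  ((a <? b) && (b <? c)) || ((b <? c) && (c <? a)) || ((c <? a) && (a <? b)).
Lemma btwb_spec a b c : btwb a b c = true <-> btw a b c.
Proof. unfold btwb, btw. rewrite !orb_true_iff, !andb_true_iff, !Nat.ltb_lt. tauto. Qed.

Definition crossc (c d : nat*nat) : Prop :=
  (btw (fst c) (fst d) (snd c) /\ btw (snd c) (snd d) (fst c)) \/
  (btw (fst c) (snd d) (snd c) /\ btw (snd c) (fst d) (fst c)).
Definition crossb (c d : nat*nat) : bool :=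
  (btwb (fst c) (fst d) (snd c) && btwb (snd c) (snd d) (fst c)) ||
  (btwb (fst c) (snd d) (snd c) && btwb (snd c) (fst d) (fst c)).
Lemma crossb_spec c d : crossb c d = true <-> crossc c d.
Proof. unfold crossb, crossc. rewrite !orb_true_iff, !andb_true_iff, !btwb_spec. tauto. Qed.

Lemma crossc_sym c d : crossc c d -> crossc d c.
Proof. destruct c as [p q], d as [r s]; unfold crossc, btw; simpl; lia. Qed.

Definition peqb (c d : nat*nat) : bool := (fst c =? fst d) && (snd c =? snd d).
Lemma peqb_spec c d : peqb c d = true <-> c = d.
Proof. destruct c, d; unfold peqb; simpl; rewrite andb_true_iff, !Nat.eqb_eq; split.
  intros [-> ->]; auto. intros H; inversion H; auto. Qed.

Definition adjc (al : list nat) (a b : nat) : Prop :=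
  a <> b /\ ((forall z, In z al -> ~ btw a z b) \/ (forall z, In z al -> ~ btw b z a)).

Lemma adjc_sym al a b : adjc al a b -> adjc al b a.
Proof. unfold adjc; intros [H1 [H2|H2]]; split; auto. Qed.

Lemma not_adjc al a b : a <> b -> ~ adjc al a b ->
  (exists z, In z al /\ btw a z b) /\ (exists z, In z al /\ btw b z a).
Proof.
  intros Hab H. split.
  - apply NNPP; intro Hn. apply H. split; auto. left. intros z Hz Hb. apply Hn; eauto.
  - apply NNPP; intro Hn. apply H. split; auto. right. intros z Hz Hb. apply Hn; eauto.
Qed.

Definition valid (al : list nat) (col : nat -> bool) (ch : list (nat*nat)) : Prop :=
  NoDup al /\
  (forall a b, In a al -> In b al -> adjc al a b -> col a <> col b) /\
  (forall v e, In (v,e) ch -> In v al /\ In e al /\ col v = true /\ col e = false /\ ~ adjc al v e) /\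
  NoDup ch /\
  (forall c d, In c ch -> In d ch -> forall a b, (a = fst c \/ a = snd c) -> (b = fst d \/ b = snd d) ->
      adjc al a b -> ~ crossc c d) /\
  (forall c d1 d2, In c ch -> In d1 ch -> In d2 ch -> d1 <> d2 -> fst d1 = fst d2 ->
      crossc c d1 -> crossc c d2 -> False).

Lemma min_exists {A} (f : A -> nat) (l : list A) : l <> [] ->
  exists a, In a l /\ forall b, In b l -> f a <= f b.
Proof.
  induction l as [|x l IH]; intros H; [congruence|].
  destruct l as [|y l'].
  - exists x; split; [left; auto|]. intros b [<-|[]]; lia.
  - destruct IH as [a [Ha Hm]]; [discriminate|].
    destruct (le_lt_dec (f x) (f a)).
    + exists x; split; [left; auto|]. intros b [<-|Hb]; [lia|]. specialize (Hm b Hb); lia.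
    + exists a; split; [right; auto|]. intros b [<-|Hb]; [lia|]. auto.
Qed.

Lemma min_prop (P : nat -> Prop) (l : list nat) : (exists z, In z l /\ P z) ->
  exists n, In n l /\ P n /\ forall w, In w l -> P w -> n <= w.
Proof.
  induction l as [|a l IH]; intros [z [Hz Pz]]; [destruct Hz|].
  destruct (classic (exists z, In z l /\ P z)) as [He|He].
  - destruct (IH He) as [n [Hn [Pn Hm]]].
    destruct (classic (P a /\ a < n)) as [[Pa Han]|Ha].
    + exists a. split; [left; auto|]. split; auto. intros w [<-|Hw] Pw; [lia|].
      specialize (Hm w Hw Pw); lia.
    + exists n. split; [right; auto|]. split; auto. intros w [<-|Hw] Pw; [|auto].
      destruct (le_lt_dec n a); auto. exfalso; apply Ha; auto.
  - destruct Hz as [<-|Hz]; [|exfalso; apply He; eauto].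
    exists a. split; [left; auto|]. split; auto. intros w [<-|Hw] Pw; [lia|].
    exfalso; apply He; eauto.
Qed.

Lemma length_filter_split {A} (f : A -> bool) (l : list A) :
  length l = length (filter f l) + length (filter (fun x => negb (f x)) l).
Proof. induction l as [|a l IH]; simpl; auto. destruct (f a); simpl; lia. Qed.

Lemma len_le1 {A} (l : list A) : NoDup l -> (forall a b, In a l -> In b l -> a = b) -> length l <= 1.
Proof.
  intros Hn H. destruct l as [|a [|b l]]; simpl; try lia.
  inversion Hn; subst. exfalso. apply H2. rewrite (H a b); simpl; auto.
Qed.

Lemma len_le2 {A} (l : list A) (c : A) : NoDup l ->
  (forall a b, In a l -> In b l -> a <> c -> b <> c -> a = b) -> length l <= 2.
Proof.
  intros Hn H. destruct l as [|a l]; simpl; try lia.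
  inversion Hn; subst.
  assert (length l <= 1); [|lia].
  apply len_le1; auto.
  destruct (classic (a = c)) as [->|Hac].
  - intros x y Hx Hy. apply H; simpl; auto; intro; subst; contradiction.
  - assert (Hall : forall x, In x l -> x = c).
    { intros x Hx. apply NNPP; intro Hxc. apply H2. rewrite (H a x); simpl; auto. }
    intros x y Hx Hy. rewrite (Hall x Hx), (Hall y Hy); auto.
Qed.

Lemma len_removed {A} (f : A -> bool) (l : list A) (c : A) : NoDup l ->
  (forall a b, In a l -> In b l -> f a = false -> f b = false -> a <> c -> b <> c -> a = b) ->
  length l <= length (filter f l) + 2.
Proof.
  intros Hn H. rewrite (length_filter_split f l).
  assert (length (filter (fun x => negb (f x)) l) <= 2); [|lia].
  apply len_le2 with c. apply NoDup_filter; auto.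
  intros a b Ha Hb. rewrite filter_In in Ha, Hb. destruct Ha as [Ha Fa], Hb as [Hb Fb].
  apply negb_true_iff in Fa, Fb. apply H; auto.
Qed.

Lemma len_filter_one (l : list nat) a : NoDup l -> In a l ->
  length (filter (fun z => negb (z =? a)) l) + 1 = length l.
Proof.
  induction l as [|x l IH]; intros Hn Ha; [destruct Ha|].
  inversion Hn; subst. simpl.
  destruct (Nat.eqb_spec x a); simpl; subst.
  - assert (E : filter (fun z => negb (z =? a)) l = l).
    { clear IH Ha Hn. induction l as [|y l IH2]; simpl; auto.
      destruct (Nat.eqb_spec y a); subst; simpl. exfalso; apply H1; left; auto.
      f_equal. apply IH2. intro; apply H1; right; auto. inversion H2; auto. }
    rewrite E; lia.
  - destruct Ha as [Ha|Ha]; [congruence|]. rewrite <- (IH H2 Ha). lia.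
Qed.

Lemma len_filter_two (l : list nat) a b : NoDup l -> In a l -> In b l -> a <> b ->
  length (filter (fun z => negb (z =? a) && negb (z =? b)) l) + 2 = length l.
Proof.
  intros Hn Ha Hb Hab.
  assert (E : filter (fun z => negb (z =? a) && negb (z =? b)) l =
              filter (fun z => negb (z =? b)) (filter (fun z => negb (z =? a)) l)).
  { clear. induction l as [|x l IH]; simpl; auto.
    destruct (x =? a); simpl; destruct (x =? b); simpl; rewrite IH; reflexivity. }
  rewrite E.
  rewrite <- (len_filter_one l a Hn Ha).
  rewrite <- (len_filter_one (filter (fun z => negb (z =? a)) l) b).
  - lia.
  - apply NoDup_filter; auto.
  - apply filter_In. split; auto. apply negb_true_iff, Nat.eqb_neq; auto.
Qed.

Definition key (K x : nat) (d : bool) (z : nat) : nat :=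
  if d then (if x <=? z then z - x else z + K - x) else (if z <=? x then x - z else x + K - z).
Definition kinv (K x : nat) (d : bool) (w : nat) : nat :=
  if d then (if w + x <? K then w + x else w + x - K) else key K x false w.

Ltac kcase := repeat match goal with
  | |- context [?a <=? ?b] => destruct (Nat.leb_spec a b)
  | |- context [?a <? ?b] => destruct (Nat.ltb_spec a b)
  | H : context [?a <=? ?b] |- _ => destruct (Nat.leb_spec a b)
  end.

Lemma key_lt K x d z : x < K -> z < K -> key K x d z < K.
Proof. intros; unfold key; destruct d; kcase; try lia. Qed.
Lemma key_x K x d : key K x d x = 0.
Proof. unfold key; destruct d; kcase; try lia. Qed.
Lemma kinv_key K x d z : x < K -> z < K -> kinv K x d (key K x d z) = z.
Proof. intros; unfold kinv, key; destruct d; kcase; try lia. Qed.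
Lemma key_inj K x d a b : x < K -> a < K -> b < K -> key K x d a = key K x d b -> a = b.
Proof. intros. rewrite <- (kinv_key K x d a) by auto. rewrite <- (kinv_key K x d b) by auto. rewrite H2; reflexivity. Qed.

Lemma key_btw K x d a b c : x < K -> a < K -> b < K -> c < K ->
  (bt d a b c <-> btw (key K x d a) (key K x d b) (key K x d c)).
Proof.
  intros. unfold key, bt. destruct d; kcase; unfold btw; try lia.
Qed.

Lemma key_dist K x d a b : x < K -> a < K -> b < K ->
  key K a d b = (if key K x d a <=? key K x d b then key K x d b - key K x d a
                 else key K x d b + K - key K x d a).
Proof. intros. unfold key. destruct d; kcase; try lia. Qed.

Lemma key_neg K a b d : key K a (negb d) b = key K b d a.
Proof. unfold key; destruct d; simpl; kcase; try lia. Qed.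

Definition kmap K x d (c : nat*nat) : nat*nat := (key K x d (fst c), key K x d (snd c)).

Lemma key_cross K x d p q r s : x < K -> p < K -> q < K -> r < K -> s < K ->
  (crossc (p,q) (r,s) <-> crossc (kmap K x d (p,q)) (kmap K x d (r,s))).
Proof.
  intros. unfold kmap, crossc; simpl.
  rewrite <- !key_btw by auto. unfold bt. destruct d; tauto.
Qed.

Lemma key_nobtw K x d al a b : x < K -> (forall z, In z al -> z < K) -> a < K -> b < K ->
  ((forall z', In z' (map (key K x d) al) -> ~ btw (key K x d a) z' (key K x d b)) <->
   (forall z, In z al -> ~ bt d a z b)).
Proof.
  intros Hx Hal Ha Hb. split.
  - intros H z Hz Hbt. apply (H (key K x d z)). apply in_map; auto.
    apply key_btw; auto.
  - intros H z' Hz' Hbt. apply in_map_iff in Hz'. destruct Hz' as [z [<- Hz]].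
    apply (H z Hz). apply (key_btw K x); auto.
Qed.

Lemma key_adjc K x d al a b : x < K -> (forall z, In z al -> z < K) -> a < K -> b < K ->
  (adjc (map (key K x d) al) (key K x d a) (key K x d b) <-> adjc al a b).
Proof.
  intros Hx Hal Ha Hb. unfold adjc.
  rewrite !key_nobtw by auto.
  assert (E: key K x d a <> key K x d b <-> a <> b).
  { split; intros H1 H2; apply H1; [subst; auto|]. apply (key_inj K x d); auto. }
  rewrite E. unfold bt. destruct d; tauto.
Qed.

Lemma valid_key al col ch K x d : valid al col ch -> (forall z, In z al -> z < K) -> x < K ->
  valid (map (key K x d) al) (fun w => col (kinv K x d w)) (map (kmap K x d) ch).
Proof.
  intros [Hnd [Halt [Hch [Hndc [HB HC]]]]] Hal Hx.
  assert (Hchl : forall v e, In (v,e) ch -> v < K /\ e < K).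
  { intros v e H. destruct (Hch v e H) as [H1 [H2 _]]. auto. }
  refine (conj _ (conj _ (conj _ (conj _ (conj _ _))))).
  - apply NoDup_map_NoDup_ForallPairs; auto; red. intros a b Ha Hb. apply (key_inj K x d); auto.
  - intros a' b' Ha' Hb' Hadj.
    apply in_map_iff in Ha'. destruct Ha' as [a [<- Ha]].
    apply in_map_iff in Hb'. destruct Hb' as [b [<- Hb]].
    rewrite !kinv_key by auto. apply Halt; auto.
    apply (key_adjc K x d); auto.
  - intros v' e' Hin. apply in_map_iff in Hin. destruct Hin as [[v e] [Heq Hin]].
    unfold kmap in Heq; simpl in Heq. injection Heq as <- <-.
    destruct (Hchl v e Hin). destruct (Hch v e Hin) as [A1 [A2 [A3 [A4 A5]]]].
    rewrite !kinv_key by auto. rewrite key_adjc by auto.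
    repeat split; auto; apply in_map; auto.
  - apply NoDup_map_NoDup_ForallPairs; auto; red. intros [a1 a2] [b1 b2] Ha Hb Heq.
    unfold kmap in Heq; simpl in Heq. inversion Heq.
    destruct (Hchl _ _ Ha), (Hchl _ _ Hb).
    f_equal; apply (key_inj K x d); auto.
  - intros c' d' Hc' Hd' a' b' Ha' Hb' Hadj.
    apply in_map_iff in Hc'. destruct Hc' as [[p q] [<- Hc]].
    apply in_map_iff in Hd'. destruct Hd' as [[r s] [<- Hd]].
    destruct (Hchl _ _ Hc), (Hchl _ _ Hd).
    rewrite <- key_cross by auto.
    unfold kmap in Ha', Hb'; simpl in Ha', Hb'.
    destruct Ha' as [->| ->]; destruct Hb' as [->| ->];
      rewrite key_adjc in Hadj by auto; (eapply (HB (p,q) (r,s) Hc Hd); [ | | exact Hadj]); simpl; auto.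
  - intros c' d1' d2' Hc' Hd1' Hd2' Hne Hf Hx1 Hx2.
    apply in_map_iff in Hc'. destruct Hc' as [[p q] [<- Hc]].
    apply in_map_iff in Hd1'. destruct Hd1' as [[r s] [<- Hd1]].
    apply in_map_iff in Hd2'. destruct Hd2' as [[t u] [<- Hd2]].
    destruct (Hchl _ _ Hc), (Hchl _ _ Hd1), (Hchl _ _ Hd2).
    rewrite <- key_cross in Hx1, Hx2 by auto.
    unfold kmap in Hf; simpl in Hf.
    apply (HC (p,q) (r,s) (t,u)); auto.
    + intro Heq; apply Hne; rewrite Heq; auto.
    + simpl. apply (key_inj K x d); auto.
Qed.

Ltac bl := unfold crossc, btw in *; simpl in *; lia.

Lemma select al col ch K : valid al col ch -> ch <> [] -> (forall z, In z al -> z < K) ->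
  exists x y d, In (x,y) ch /\ forall v e, In (v,e) ch -> (v,e) <> (x,y) ->
     ~ (key K x d v <= key K x d y /\ key K x d e <= key K x d y).
Proof.
  intros Hv Hne Hal.
  destruct Hv as [Hnd [Halt [Hch [Hndc [HB HC]]]]].
  set (L := flat_map (fun c => [(c,true);(c,false)]) ch).
  assert (HL : forall c b, In c ch -> In (c,b) L).
  { intros c b Hc. apply in_flat_map. exists c. split; auto. destruct b; simpl; auto. }
  destruct (min_exists (fun p => key K (fst (fst p)) (snd p) (snd (fst p))) L) as [[[x y] d] [Hin Hmin]].
  { destruct ch as [|c ch']; [congruence|]. simpl. discriminate. }
  apply in_flat_map in Hin. destruct Hin as [c [Hc Hcin]].
  assert (Hxy : In (x,y) ch).
  { simpl in Hcin. destruct Hcin as [H|[H|[]]]; inversion H; subst; auto. }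
  exists x, y, d. split; auto.
  intros v e Hve Hneq [H1 H2].
  destruct (Hch x y Hxy) as [Hx [Hy [Cx [Cy _]]]].
  destruct (Hch v e Hve) as [Hv' [He [Cv [Ce _]]]].
  pose proof (Hal x Hx). pose proof (Hal y Hy). pose proof (Hal v Hv'). pose proof (Hal e He).
  pose proof (key_x K x d) as Kx.
  destruct (le_lt_dec (key K x d v) (key K x d e)).
  - pose proof (Hmin ((v,e),d) (HL _ _ Hve)) as Hm. simpl in Hm.
    rewrite (key_dist K x d v e) in Hm by auto.
    destruct (Nat.leb_spec (key K x d v) (key K x d e)); [|lia].
    assert (key K x d v = 0) by lia.
    assert (v = x) by (apply (key_inj K x d); auto; lia). subst v.
    assert (key K x d e = key K x d y) by lia.
    assert (e = y) by (apply (key_inj K x d); auto). subst e. auto.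
  - pose proof (Hmin ((v,e),negb d) (HL _ _ Hve)) as Hm. simpl in Hm.
    rewrite key_neg in Hm. rewrite (key_dist K x d e v) in Hm by auto.
    destruct (Nat.leb_spec (key K x d e) (key K x d v)); [|lia].
    assert (key K x d e = 0) by lia.
    assert (e = x) by (apply (key_inj K x d); auto; lia). subst e. congruence.
Qed.


Lemma norm_basic al col ch y : valid al col ch -> In (0,y) ch ->
  In 0 al /\ In y al /\ col 0 = true /\ col y = false /\ 0 < y /\ ~ adjc al 0 y.
Proof.
  intros [_ [_ [Hch _]]] H. destruct (Hch 0 y H) as [A [B [C [D E]]]].
  repeat split; auto. destruct y; [congruence|lia].
Qed.

Lemma n1_exists al col ch y : valid al col ch -> In (0,y) ch ->
  exists n1, In n1 al /\ 0 < n1 < y /\ (forall w, In w al -> ~ (0 < w < n1)) /\ col n1 = false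
    /\ adjc al 0 n1.
Proof.
  intros Hv H. destruct (norm_basic _ _ _ _ Hv H) as [H0 [Hy [C0 [Cy [Ly Hna]]]]].
  destruct (not_adjc al 0 y) as [[z [Hz Hb]] _]; [lia|auto|].
  destruct (min_prop (fun z => 0 < z < y) al) as [n1 [Hn1 [Pn1 Hm]]].
  { exists z; split; auto. bl. }
  assert (Hadj : adjc al 0 n1).
  { split; [lia|]. left. intros w Hw Hb'. assert (0 < w < n1) by bl. specialize (Hm w Hw); lia. }
  exists n1. split; [auto|]. split; [lia|]. split; [intros w Hw Hb'; specialize (Hm w Hw); lia|].
  split; [|auto].
  destruct Hv as [_ [Halt _]]. pose proof (Halt 0 n1 H0 Hn1 Hadj). destruct (col n1); congruence.
Qed.

Lemma next_exists al col (a y : nat) : (forall a b, In a al -> In b al -> adjc al a b -> col a <> col b) ->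
  In a al -> In y al -> a < y -> col a = col y ->
  exists n, In n al /\ a < n < y /\ (forall w, In w al -> ~ (a < w < n)) /\ col n = negb (col a).
Proof.
  intros Halt Ha Hy Hay Hc.
  destruct (classic (exists z, In z al /\ a < z < y)) as [He|He].
  - destruct (min_prop (fun z => a < z < y) al He) as [n [Hn [Pn Hm]]].
    assert (Hadj : adjc al a n).
    { split; [lia|]. left. intros w Hw Hb'. assert (a < w < n) by bl. specialize (Hm w Hw); lia. }
    exists n. split; [auto|]. split; [lia|]. split; [intros w Hw Hb'; specialize (Hm w Hw); lia|].
    pose proof (Halt a n Ha Hn Hadj). destruct (col a), (col n); simpl; congruence.
  - exfalso. apply (Halt a y Ha Hy); auto. split; [lia|]. left.
    intros w Hw Hb'. apply He. exists w. split; auto. bl.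
Qed.

Lemma minim_out (ch : list (nat*nat)) y v e :
  (forall v e, In (v,e) ch -> (v,e) <> (0,y) -> ~ (v <= y /\ e <= y)) ->
  In (v,e) ch -> (v,e) <> (0,y) -> y < v \/ y < e.
Proof. intros M H Hn. specialize (M v e H Hn). lia. Qed.

Lemma reduce_valid al col ch n1 n2 n3 (f : nat*nat -> bool) : valid al col ch ->
  In n1 al -> In n2 al -> In n3 al -> In 0 al -> 0 < n1 -> n1 < n2 -> n2 < n3 ->
  col 0 = true -> col n2 = true -> col n3 = false ->
  (forall w, In w al -> ~ (0 < w < n1)) -> (forall w, In w al -> ~ (n1 < w < n2)) ->
  (forall w, In w al -> ~ (n2 < w < n3)) ->
  (forall v e, In (v,e) ch -> v <> n1 /\ e <> n1) ->
  (forall v e, In (v,e) ch -> f (v,e) = true -> v <> n2 /\ (v,e) <> (0,n3)) ->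
  (forall t s, In (0,t) ch -> In (s,n3) ch -> f (0,t) = true -> f (s,n3) = true -> ~ crossc (0,t) (s,n3)) ->
  valid (filter (fun z => negb (z =? n1) && negb (z =? n2)) al) col (filter f ch).
Proof.
  intros Hv Hn1 Hn2 Hn3 H0 L1 L2 L3 C0 C2 C3 E1 E2 E3 Nn1 Kf Kx.
  destruct Hv as [Hnd [Halt [Hch [Hndc [HB HC]]]]].
  set (al' := filter (fun z => negb (z =? n1) && negb (z =? n2)) al).
  assert (Hal' : forall z, In z al' <-> In z al /\ z <> n1 /\ z <> n2).
  { intros z. unfold al'. rewrite filter_In, andb_true_iff, !negb_true_iff, !Nat.eqb_neq. tauto. }
  assert (Pre : forall w, In w al -> w <> n1 -> w <> n2 -> w = 0 \/ n3 <= w).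
  { intros w Hw a b. specialize (E1 w Hw). specialize (E2 w Hw). specialize (E3 w Hw). lia. }
  assert (Seam : forall a b, In a al' -> In b al' -> adjc al' a b ->
             adjc al a b \/ (a = 0 /\ b = n3) \/ (a = n3 /\ b = 0)).
  { intros a b Ha Hb Hadj. rewrite Hal' in Ha, Hb.
    destruct (classic (adjc al a b)) as [Hy|Hn]; [left; auto|right].
    destruct Hadj as [Hab [P1|P1]]; destruct (not_adjc al a b Hab Hn) as [[z1 [Hz1 B1]] [z2 [Hz2 B2]]].
    - assert (Z : z1 = n1 \/ z1 = n2).
      { apply NNPP; intro Hz. apply (P1 z1); auto. apply Hal'. repeat split; auto; intro; apply Hz; auto. }
      assert (~ btw a 0 b) by (apply P1; apply Hal'; repeat split; auto; lia).
      assert (~ btw a n3 b) by (apply P1; apply Hal'; repeat split; auto; lia).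
      pose proof (Pre a (proj1 Ha) (proj1 (proj2 Ha)) (proj2 (proj2 Ha))).
      pose proof (Pre b (proj1 Hb) (proj1 (proj2 Hb)) (proj2 (proj2 Hb))).
      assert (0 < z1 < n3) by lia. left. clear - H H1 H2 H3 H4 B1 Hab. bl.
    - assert (Z : z2 = n1 \/ z2 = n2).
      { apply NNPP; intro Hz. apply (P1 z2); auto. apply Hal'. repeat split; auto; intro; apply Hz; auto. }
      assert (~ btw b 0 a) by (apply P1; apply Hal'; repeat split; auto; lia).
      assert (~ btw b n3 a) by (apply P1; apply Hal'; repeat split; auto; lia).
      pose proof (Pre a (proj1 Ha) (proj1 (proj2 Ha)) (proj2 (proj2 Ha))).
      pose proof (Pre b (proj1 Hb) (proj1 (proj2 Hb)) (proj2 (proj2 Hb))).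
      assert (0 < z2 < n3) by lia. right. clear - H H1 H2 H3 H4 B2 Hab. bl. }
  assert (Hch' : forall v e, In (v,e) (filter f ch) ->
      In v al' /\ In e al' /\ col v = true /\ col e = false /\ ~ adjc al' v e).
  { intros v e Hin. apply filter_In in Hin. destruct Hin as [Hin Hf].
    destruct (Hch v e Hin) as [Hv [He [Cv [Ce Hna]]]].
    destruct (Nn1 v e Hin). destruct (Kf v e Hin Hf).
    assert (e <> n2) by (intro; subst; congruence).
    assert (Hv' : In v al') by (apply Hal'; auto).
    assert (He' : In e al') by (apply Hal'; auto).
    repeat split; auto.
    intro Hadj. destruct (Seam v e Hv' He' Hadj) as [A|[[-> ->]|[-> ->]]]; [auto|auto|congruence]. }
  split; [apply NoDup_filter; auto|].
  split.
  { intros a b Ha Hb Hadj. destruct (Seam a b Ha Hb Hadj) as [A|[[-> ->]|[-> ->]]].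
    - apply Halt; auto; [apply Hal' in Ha|apply Hal' in Hb]; tauto.
    - congruence.
    - congruence. }
  split; [auto|].
  split; [apply NoDup_filter; auto|].
  split.
  { intros [v1 e1] [v2 e2] Hc Hd a b Ha Hb Hadj.
    destruct (Hch' v1 e1 Hc) as [Hv1 [He1 [Cv1 [Ce1 _]]]].
    destruct (Hch' v2 e2 Hd) as [Hv2 [He2 [Cv2 [Ce2 _]]]].
    assert (Ha' : In a al') by (simpl in Ha; destruct Ha as [->| ->]; auto).
    assert (Hb' : In b al') by (simpl in Hb; destruct Hb as [->| ->]; auto).
    apply filter_In in Hc; apply filter_In in Hd.
    destruct (Seam a b Ha' Hb' Hadj) as [A|[[-> ->]|[-> ->]]].
    - apply (HB (v1,e1) (v2,e2) (proj1 Hc) (proj1 Hd) a b); auto.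
    - simpl in Ha, Hb. destruct Ha as [Ha|Ha]; [|subst; congruence].
      destruct Hb as [Hb|Hb]; [subst; congruence|]. subst.
      apply Kx; tauto.
    - simpl in Ha, Hb. destruct Hb as [Hb|Hb]; [|subst; congruence].
      destruct Ha as [Ha|Ha]; [subst; congruence|]. subst.
      intro Hx. apply crossc_sym in Hx. revert Hx. apply Kx; tauto. }
  intros c d1 d2 Hc Hd1 Hd2. apply filter_In in Hc, Hd1, Hd2.
  apply HC; tauto.
Qed.



Lemma next_min al col (a y : nat) : (forall a b, In a al -> In b al -> adjc al a b -> col a <> col b) ->
  In a al -> (exists z, In z al /\ a < z < y) ->
  exists n, In n al /\ a < n < y /\ (forall w, In w al -> ~ (a < w < n)) /\ col n = negb (col a).
Proof.
  intros Halt Ha He.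
  destruct (min_prop (fun z => a < z < y) al He) as [n [Hn [Pn Hm]]].
  assert (Hadj : adjc al a n).
  { split; [lia|]. left. intros w Hw Hb'. assert (a < w < n) by bl. specialize (Hm w Hw); lia. }
  exists n. split; [auto|]. split; [lia|]. split; [intros w Hw Hb'; specialize (Hm w Hw); lia|].
  pose proof (Halt a n Ha Hn Hadj). destruct (col a), (col n); simpl; congruence.
Qed.

Lemma common_facts al col ch y : valid al col ch -> In (0,y) ch ->
  (forall v e, In (v,e) ch -> (v,e) <> (0,y) -> ~ (v <= y /\ e <= y)) ->
  exists n1 n2, In n1 al /\ In n2 al /\ 0 < n1 < n2 /\ n2 < y /\ col n1 = false /\ col n2 = true /\
    (forall w, In w al -> ~ (0 < w < n1)) /\ (forall w, In w al -> ~ (n1 < w < n2)) /\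
    (forall v e, In (v,e) ch -> v <> n1 /\ e <> n1) /\
    (forall e, In (n2,e) ch -> y < e /\ crossc (0,y) (n2,e)) /\
    (forall e1 e2, In (n2,e1) ch -> In (n2,e2) ch -> e1 = e2).
Proof.
  intros Hv Hc M.
  pose proof Hv as Hv0. destruct Hv0 as [Hnd [Halt [Hch [Hndc [HB HC]]]]].
  destruct (norm_basic _ _ _ _ Hv Hc) as [H0 [Hy [C0 [Cy [Ly Hna]]]]].
  destruct (n1_exists _ _ _ _ Hv Hc) as [n1 [Hn1 [L1 [E1 [Cn1 A01]]]]].
  destruct (next_exists al col n1 y Halt Hn1 Hy (proj2 L1) (eq_trans Cn1 (eq_sym Cy)))
    as [n2 [Hn2 [L2 [E2 Cn2]]]].
  rewrite Cn1 in Cn2; simpl in Cn2.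
  exists n1, n2. do 8 (split; [try assumption; try lia|]).
  split; [|split].
  - intros v e Hin. destruct (Hch v e Hin) as [_ [_ [Cv [Ce _]]]].
    split; [intro; subst; congruence|]. intro; subst e.
    assert ((v,n1) <> (0,y)) by (intro Heq; inversion Heq; lia).
    destruct (minim_out ch y v n1 M Hin H); [|lia].
    apply (HB (0,y) (v,n1) Hc Hin 0 n1); simpl; auto. bl.
  - intros e Hin. assert ((n2,e) <> (0,y)) by (intro Heq; inversion Heq; lia).
    destruct (minim_out ch y n2 e M Hin H); [lia|]. split; auto. bl.
  - intros e1 e2 H1 H2. apply NNPP; intro Hne.
    assert ((n2,e1) <> (0,y)) by (intro Heq; inversion Heq; lia).
    assert ((n2,e2) <> (0,y)) by (intro Heq; inversion Heq; lia).
    destruct (minim_out ch y n2 e1 M H1 H); [lia|].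
    destruct (minim_out ch y n2 e2 M H2 H3); [lia|].
    apply (HC (0,y) (n2,e1) (n2,e2)); auto.
    + intro Heq; inversion Heq; auto.
    + bl.
    + bl.
Qed.

Lemma step_norm al col ch y : valid al col ch -> In (0,y) ch ->
  (forall v e, In (v,e) ch -> (v,e) <> (0,y) -> ~ (v <= y /\ e <= y)) ->
  exists al' ch', valid al' col ch' /\ length al' + 2 = length al /\ length ch <= length ch' + 2.
Proof.
  intros Hv Hc M.
  pose proof Hv as Hv0. destruct Hv0 as [Hnd [Halt [Hch [Hndc [HB HC]]]]].
  destruct (norm_basic _ _ _ _ Hv Hc) as [H0 [Hy [C0 [Cy [Ly Hna]]]]].
  destruct (common_facts _ _ _ _ Hv Hc M) as [n1 [n2 [Hn1 [Hn2 [L1 [L2 [Cn1 [Cn2 [E1 [E2 [Nn1 [X2 U2]]]]]]]]]]]].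
  destruct (classic (exists z, In z al /\ n2 < z < y)) as [NE|EAR].
  - destruct (next_min al col n2 y Halt Hn2 NE) as [n3 [Hn3 [L3 [E3 Cn3]]]].
    rewrite Cn2 in Cn3; simpl in Cn3.
    set (f := fun c : nat*nat => negb (peqb c (0,y)) && negb (fst c =? n2)).
    exists (filter (fun z => negb (z =? n1) && negb (z =? n2)) al), (filter f ch).
    split; [|split].
    + apply (reduce_valid al col ch n1 n2 n3 f Hv); auto; try lia.
      * intros v e Hin Hf. unfold f in Hf. apply andb_true_iff in Hf. destruct Hf as [_ Hf].
        apply negb_true_iff, Nat.eqb_neq in Hf. simpl in Hf. split; auto.
        intro Heq; inversion Heq; subst.
        apply (M 0 n3 Hin); [intro Heq'; inversion Heq'; lia|lia].
      * intros t s Ht Hs Hft Hfs Hx.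
        unfold f in Hft. apply andb_true_iff in Hft. destruct Hft as [Hft _].
        apply negb_true_iff in Hft.
        assert ((0,t) <> (0,y)) by (intro Heq; rewrite <- peqb_spec in Heq; congruence).
        assert ((s,n3) <> (0,y)) by (intro Heq; inversion Heq; lia).
        destruct (minim_out ch y s n3 M Hs H1); [|lia].
        apply (HC (s,n3) (0,y) (0,t) Hs Hc Ht); [intro Heq; inversion Heq; subst; auto | reflexivity | bl | apply crossc_sym; auto].
    + apply len_filter_two; auto; lia.
    + apply (len_removed f ch (0,y)); auto.
      intros a b Ha Hb Fa Fb Na Nb.
      unfold f in Fa, Fb. apply andb_false_iff in Fa, Fb.
      assert (peqb a (0,y) = false) by (apply not_true_iff_false; rewrite peqb_spec; auto).
      assert (peqb b (0,y) = false) by (apply not_true_iff_false; rewrite peqb_spec; auto).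
      destruct Fa as [Fa|Fa]; [rewrite H in Fa; discriminate|].
      destruct Fb as [Fb|Fb]; [rewrite H1 in Fb; discriminate|].
      apply negb_false_iff, Nat.eqb_eq in Fa, Fb.
      destruct a as [a1 a2], b as [b1 b2]; simpl in Fa, Fb; subst.
      rewrite (U2 a2 b2 Ha Hb); auto.
  - assert (EAR' : forall w, In w al -> ~ (n2 < w < y)) by (intros w Hw Hb; apply EAR; eauto).
    assert (Nn2 : forall v e, In (v,e) ch -> v <> n2).
    { intros v e Hin ->. destruct (X2 e Hin) as [Le Hx].
      apply (HB (0,y) (n2,e) Hc Hin y n2); simpl; auto.
      split; [lia|]. right. intros z Hz Hb. apply (EAR' z Hz). bl. }
    set (f := fun c : nat*nat => negb (peqb c (0,y)) &&
              negb ((fst c =? 0) && existsb (fun dd => (snd dd =? y) && crossb c dd) ch)).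
    exists (filter (fun z => negb (z =? n1) && negb (z =? n2)) al), (filter f ch).
    split; [|split].
    + apply (reduce_valid al col ch n1 n2 y f Hv); auto; try lia.
      * intros v e Hin Hf. split; [apply (Nn2 v e Hin)|].
        unfold f in Hf. apply andb_true_iff in Hf. destruct Hf as [Hf _].
        apply negb_true_iff in Hf. intro Heq. rewrite <- peqb_spec in Heq. congruence.
      * intros t s Ht Hs Hft Hfs Hx.
        unfold f in Hft. apply andb_true_iff in Hft. destruct Hft as [_ Hft].
        apply negb_true_iff in Hft. simpl in Hft.
        assert (existsb (fun dd => (snd dd =? y) && crossb (0,t) dd) ch = true).
        { apply existsb_exists. exists (s,y). split; auto. simpl.
          rewrite Nat.eqb_refl. simpl. apply crossb_spec; auto. }
        rewrite H in Hft. discriminate.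
    + apply len_filter_two; auto; lia.
    + apply (len_removed f ch (0,y)); auto.
      assert (Bad : forall a, In a ch -> f a = false -> a <> (0,y) ->
                exists t s, a = (0,t) /\ In (s,y) ch /\ y < t /\ y < s /\ t < s).
      { intros a Ha Fa Na. unfold f in Fa. apply andb_false_iff in Fa.
        assert (peqb a (0,y) = false) by (apply not_true_iff_false; rewrite peqb_spec; auto).
        destruct Fa as [Fa|Fa]; [rewrite H in Fa; discriminate|].
        apply negb_false_iff, andb_true_iff in Fa. destruct Fa as [Fa1 Fa2].
        apply Nat.eqb_eq in Fa1. apply existsb_exists in Fa2.
        destruct Fa2 as [[s y'] [Hs Hp]]. apply andb_true_iff in Hp. destruct Hp as [Hp1 Hp2].
        apply Nat.eqb_eq in Hp1. simpl in Hp1. subst y'. apply crossb_spec in Hp2.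
        destruct a as [a1 t]. simpl in Fa1. subst a1.
        assert (y < t).
        { destruct (minim_out ch y 0 t M Ha Na); lia. }
        assert ((s,y) <> (0,y)).
        { intro Heq; inversion Heq; subst. bl. }
        destruct (minim_out ch y s y M Hs H2); [|lia].
        exists t, s. repeat split; auto. bl. }
      intros a b Ha Hb Fa Fb Na Nb.
      destruct (Bad a Ha Fa Na) as [t1 [s1 [-> [Hs1 [T1 [S1 R1]]]]]].
      destruct (Bad b Hb Fb Nb) as [t2 [s2 [-> [Hs2 [T2 [S2 R2]]]]]].
      destruct (lt_eq_lt_dec t1 t2) as [[Lt|Eq]|Lt]; [exfalso| subst; auto |exfalso].
      * apply (HC (s2,y) (0,t1) (0,t2) Hs2 Ha Hb); [intro Heq; inversion Heq; lia | reflexivity | bl | bl].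
      * apply (HC (s1,y) (0,t1) (0,t2) Hs1 Ha Hb); [intro Heq; inversion Heq; lia | reflexivity | bl | bl].
Qed.



Lemma next_min_inf al col (a : nat) : (forall a b, In a al -> In b al -> adjc al a b -> col a <> col b) ->
  In a al -> (exists z, In z al /\ a < z) ->
  exists n, In n al /\ a < n /\ (forall w, In w al -> ~ (a < w < n)) /\ col n = negb (col a).
Proof.
  intros Halt Ha He.
  destruct (min_prop (fun z => a < z) al He) as [n [Hn [Pn Hm]]].
  assert (Hadj : adjc al a n).
  { split; [lia|]. left. intros w Hw Hb'. assert (a < w < n) by bl. specialize (Hm w Hw); lia. }
  exists n. split; [auto|]. split; [lia|]. split; [intros w Hw Hb'; specialize (Hm w Hw); lia|].
  pose proof (Halt a n Ha Hn Hadj). destruct (col a), (col n); simpl; congruence.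
Qed.

Lemma base_norm al col ch y : valid al col ch -> In (0,y) ch ->
  (forall v e, In (v,e) ch -> (v,e) <> (0,y) -> ~ (v <= y /\ e <= y)) ->
  length al = 6 -> length ch <= 1.
Proof.
  intros Hv Hc M Hlen.
  pose proof Hv as Hv0. destruct Hv0 as [Hnd [Halt [Hch [Hndc [HB HC]]]]].
  destruct (norm_basic _ _ _ _ Hv Hc) as [H0 [Hy [C0 [Cy [Ly Hna]]]]].
  destruct (common_facts _ _ _ _ Hv Hc M) as [n1 [n2 [Hn1 [Hn2 [L1 [L2 [Cn1 [Cn2 [E1 [E2 [Nn1 [X2 U2]]]]]]]]]]]].
  destruct (not_adjc al 0 y) as [_ [z [Hz Bz]]]; [lia|auto|].
  destruct (next_min_inf al col y Halt Hy) as [k1 [Hk1 [Lk1 [Ek1 Ck1]]]].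
  { exists z; split; auto. bl. }
  rewrite Cy in Ck1; simpl in Ck1.
  destruct (next_min_inf al col k1 Halt Hk1) as [k2 [Hk2 [Lk2 [Ek2 Ck2]]]].
  { apply NNPP; intro Hn. apply (Halt k1 0 Hk1 H0); [|congruence].
    split; [lia|]. left. intros w Hw Hb. apply Hn. exists w; split; auto. bl. }
  rewrite Ck1 in Ck2; simpl in Ck2.
  assert (Hall : forall w, In w al -> w = 0 \/ w = n1 \/ w = n2 \/ w = y \/ w = k1 \/ w = k2).
  { intros w Hw. apply NNPP; intro Hn.
    assert (Hnd7 : NoDup [w;0;n1;n2;y;k1;k2]).
    { repeat constructor; simpl; intuition lia. }
    assert (Hinc : incl [w;0;n1;n2;y;k1;k2] al).
    { intros u Hu. simpl in Hu. intuition congruence. }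
    pose proof (NoDup_incl_length Hnd7 Hinc). simpl in H. lia. }
  assert (Nn2 : forall v e, In (v,e) ch -> v <> n2).
  { intros v e Hin ->. destruct (X2 e Hin) as [Le Hx].
    apply (HB (0,y) (n2,e) Hc Hin y n2); simpl; auto.
    split; [lia|]. right. intros w Hw Hb. destruct (Hall w Hw) as [->|[->|[->|[->|[->| ->]]]]]; bl. }
  apply (len_le1 ch Hndc).
  assert (All : forall c, In c ch -> c = (0,y)).
  { intros [v e] Hin. destruct (Hch v e Hin) as [Hv' [He [Cv [Ce Hnadj]]]].
    destruct (Nn1 v e Hin) as [Nv Ne]. pose proof (Nn2 v e Hin) as Nv2.
    destruct (Hall v Hv') as [->|[->|[->|[->|[->| ->]]]]]; try congruence;
    destruct (Hall e He) as [->|[->|[->|[->|[->| ->]]]]]; try congruence; exfalso; apply Hnadj.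
    - split; [lia|]. right. intros w Hw Hb. destruct (Hall w Hw) as [->|[->|[->|[->|[->| ->]]]]]; bl.
    - split; [lia|]. right. intros w Hw Hb. destruct (Hall w Hw) as [->|[->|[->|[->|[->| ->]]]]]; bl.
    - split; [lia|]. left. intros w Hw Hb. destruct (Hall w Hw) as [->|[->|[->|[->|[->| ->]]]]]; bl. }
  intros a b Ha Hb. rewrite (All a Ha), (All b Hb); auto.
Qed.

Theorem comb_bound : forall k al col ch, valid al col ch -> length al = 2*k -> 3 <= k ->
  length ch + 5 <= 2*k.
Proof.
  induction k as [|k IH]; intros al col ch Hv Hl Hk; [lia|].
  destruct ch as [|c0 ch0] eqn:Ech; [simpl; lia|]. rewrite <- Ech in *.
  assert (Hne : ch <> []) by (rewrite Ech; discriminate).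
  set (K := S (list_max al)).
  assert (HK : forall z, In z al -> z < K).
  { intros z Hz. unfold K. assert (z <= list_max al); [|lia].
    pose proof (list_max_le al (list_max al)) as [H _]. specialize (H (le_n _)).
    rewrite Forall_forall in H. auto. }
  destruct (select al col ch K Hv Hne HK) as [x [y [d [Hxy Hmin]]]].
  pose proof Hv as Hv0. destruct Hv0 as [_ [_ [Hch _]]].
  destruct (Hch x y Hxy) as [Hx [Hy _]].
  pose proof (HK x Hx) as HxK. pose proof (HK y Hy) as HyK.
  pose proof (valid_key al col ch K x d Hv HK HxK) as Hv'.
  set (al' := map (key K x d) al) in *. set (ch' := map (kmap K x d) ch) in *.
  assert (Hc' : In (0, key K x d y) ch').
  { unfold ch'. replace (0, key K x d y) with (kmap K x d (x,y)); [apply in_map; auto|].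
    unfold kmap; simpl. rewrite key_x; auto. }
  assert (M' : forall v e, In (v,e) ch' -> (v,e) <> (0, key K x d y) -> ~ (v <= key K x d y /\ e <= key K x d y)).
  { intros v' e' Hin Hne'. unfold ch' in Hin. apply in_map_iff in Hin.
    destruct Hin as [[v e] [Heq Hin]]. unfold kmap in Heq; simpl in Heq. inversion Heq; subst.
    apply Hmin; auto. intro Heq2. inversion Heq2; subst. apply Hne'. rewrite key_x; auto. }
  assert (Ll : length al' = 2 * S k) by (unfold al'; rewrite length_map; auto).
  assert (Lc : length ch' = length ch) by (unfold ch'; rewrite length_map; auto).
  destruct (Nat.eq_dec k 2) as [->|Hk2].
  - pose proof (base_norm al' _ ch' _ Hv' Hc' M' ltac:(lia)). lia.
  - destruct (step_norm al' _ ch' _ Hv' Hc' M') as [al2 [ch2 [Hv2 [L2 C2]]]].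
    specialize (IH al2 _ ch2 Hv2 ltac:(lia) ltac:(lia)). lia.
Qed.

Open Scope R_scope.

Definition orient (P Q R0 : point) : R :=
  (fst Q - fst P) * (snd R0 - snd P) - (snd Q - snd P) * (fst R0 - fst P).

Lemma orient_circle t u w :
  orient (cos t, sin t) (cos (t + 2*u), sin (t + 2*u)) (cos (t + 2*u + 2*w), sin (t + 2*u + 2*w))
  = 4 * sin u * sin w * sin (u + w).
Proof.
  assert (E1 : sin (2*w) = sin (t+2*u+2*w) * cos (t+2*u) - cos (t+2*u+2*w) * sin (t+2*u)).
  { rewrite <- sin_minus. f_equal. ring. }
  assert (E2 : sin (2*u) = sin (t+2*u) * cos t - cos (t+2*u) * sin t).
  { rewrite <- sin_minus. f_equal. ring. }
  assert (E3 : sin (2*u+2*w) = sin (t+2*u+2*w) * cos t - cos (t+2*u+2*w) * sin t).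
  { rewrite <- sin_minus. f_equal. ring. }
  assert (Hor : orient (cos t, sin t) (cos (t + 2*u), sin (t + 2*u)) (cos (t + 2*u + 2*w), sin (t + 2*u + 2*w))
     = sin (2*w) + sin (2*u) - sin (2*u + 2*w)).
  { rewrite E1, E2, E3. unfold orient; simpl. ring. }
  rewrite Hor. rewrite sin_plus, !sin_2a, !cos_2a_sin, sin_plus. ring.
Qed.

Definition O3 (m a b c : nat) : R := orient (vtx m a) (vtx m b) (vtx m c).

Lemma O3_val m a b c : (0 < m)%nat -> (a <= b)%nat -> (b <= c)%nat ->
  O3 m a b c = 4 * sin (PI * INR (b - a) / INR m) * sin (PI * INR (c - b) / INR m)
                 * sin (PI * INR (c - a) / INR m).
Proof.
  intros Hm Hab Hbc.
  assert (Hm' : 0 < INR m) by (apply lt_0_INR; auto).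
  set (t := 2 * PI * INR a / INR m).
  set (u := PI * INR (b - a) / INR m).
  set (w := PI * INR (c - b) / INR m).
  assert (Eb : 2 * PI * INR b / INR m = t + 2 * u).
  { unfold t, u. rewrite minus_INR by auto. field. lra. }
  assert (Ec : 2 * PI * INR c / INR m = t + 2 * u + 2 * w).
  { unfold t, u, w. rewrite !minus_INR by auto. field. lra. }
  assert (Euw : PI * INR (c - a) / INR m = u + w).
  { unfold u, w. rewrite !minus_INR by lia. field. lra. }
  unfold O3, vtx. rewrite Eb, Ec, Euw. fold t. apply orient_circle.
Qed.

Lemma angle_bounds k m : (0 < m)%nat -> (k <= m)%nat ->
  0 <= PI * INR k / INR m <= PI.
Proof.
  intros Hm Hk. assert (Hm' : 0 < INR m) by (apply lt_0_INR; auto).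
  pose proof (le_INR _ _ Hk). pose proof (pos_INR k). pose proof PI_RGT_0.
  split.
  - unfold Rdiv. apply Rmult_le_pos; [apply Rmult_le_pos; lra|]. left; apply Rinv_0_lt_compat; lra.
  - apply Rmult_le_reg_r with (INR m); auto. unfold Rdiv. rewrite Rmult_assoc, Rinv_l by lra. nra.
Qed.

Lemma angle_bounds_strict k m : (0 < m)%nat -> (0 < k)%nat -> (k < m)%nat ->
  0 < PI * INR k / INR m < PI.
Proof.
  intros Hm H0 Hk. assert (Hm' : 0 < INR m) by (apply lt_0_INR; auto).
  pose proof (lt_INR _ _ Hk). pose proof (lt_0_INR k H0). pose proof PI_RGT_0.
  split.
  - unfold Rdiv. apply Rmult_lt_0_compat; [apply Rmult_lt_0_compat; lra|]. apply Rinv_0_lt_compat; lra.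
  - apply Rmult_lt_reg_r with (INR m); auto. unfold Rdiv. rewrite Rmult_assoc, Rinv_l by lra. nra.
Qed.

Lemma O3_nonneg m a b c : (0 < m)%nat -> (a <= b)%nat -> (b <= c)%nat -> (c <= a + m)%nat -> 0 <= O3 m a b c.
Proof.
  intros. rewrite O3_val by auto.
  destruct (angle_bounds (b - a) m) as [A1 A2]; auto; try lia.
  destruct (angle_bounds (c - b) m) as [B1 B2]; auto; try lia.
  destruct (angle_bounds (c - a) m) as [C1 C2]; auto; try lia.
  pose proof (sin_ge_0 _ A1 A2). pose proof (sin_ge_0 _ B1 B2). pose proof (sin_ge_0 _ C1 C2).
  repeat apply Rmult_le_pos; lra.
Qed.

Lemma O3_pos m a b c : (0 < m)%nat -> (a < b)%nat -> (b < c)%nat -> (c < a + m)%nat -> 0 < O3 m a b c.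
Proof.
  intros. rewrite O3_val by lia.
  destruct (angle_bounds_strict (b - a) m) as [A1 A2]; auto; try lia.
  destruct (angle_bounds_strict (c - b) m) as [B1 B2]; auto; try lia.
  destruct (angle_bounds_strict (c - a) m) as [C1 C2]; auto; try lia.
  pose proof (sin_gt_0 _ A1 A2). pose proof (sin_gt_0 _ B1 B2). pose proof (sin_gt_0 _ C1 C2).
  repeat apply Rmult_lt_0_compat; lra.
Qed.

Lemma orient_expand (A B C D E F : point) s t u :
  orient (lerp A B s) (lerp C D t) (lerp E F u) =
    (1-s)*(1-t)*(1-u)*orient A C E + (1-s)*(1-t)*u*orient A C F
  + (1-s)*t*(1-u)*orient A D E + (1-s)*t*u*orient A D F
  + s*(1-t)*(1-u)*orient B C E + s*(1-t)*u*orient B C F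
  + s*t*(1-u)*orient B D E + s*t*u*orient B D F.
Proof.
  destruct A, B, C, D, E, F. unfold orient, lerp; simpl. ring.
Qed.

Definition Lp (m i : nat) (s : R) : point := lerp (vtx m i) (vtx m (S i)) s.

Lemma wO_nonneg (w o : R) : 0 <= w -> (w = 0 \/ 0 <= o) -> 0 <= w * o.
Proof. intros H [->|H2]; [lra|]. apply Rmult_le_pos; auto. Qed.

Lemma gen_pos m i1 i2 i3 s1 s2 s3 : (3 <= m)%nat -> (i1 < m)%nat -> (i2 < m)%nat -> (i3 < m)%nat ->
  0 <= s1 < 1 -> 0 <= s2 < 1 -> 0 <= s3 < 1 ->
  (i1 <= i2)%nat -> (i2 <= i3)%nat -> (i1 = i2 -> s1 = 0 /\ 0 < s2) -> (i2 = i3 -> s2 = 0 /\ 0 < s3) ->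
  ~ (i1 = i2 /\ i3 = S i1 /\ s3 = 0) -> ~ (i2 = i3 /\ i1 = 0%nat /\ s1 = 0 /\ S i2 = m) ->
  0 < orient (Lp m i1 s1) (Lp m i2 s2) (Lp m i3 s3).
Proof.
  intros Hm H1 H2 H3 S1 S2 S3 L12 L23 E12 E23 ND1 ND2.
  unfold Lp. rewrite orient_expand. fold (O3 m i1 i2 i3) (O3 m i1 i2 (S i3)) (O3 m i1 (S i2) i3)
    (O3 m i1 (S i2) (S i3)) (O3 m (S i1) i2 i3) (O3 m (S i1) i2 (S i3)) (O3 m (S i1) (S i2) i3)
    (O3 m (S i1) (S i2) (S i3)).
  assert (Hm0 : (0 < m)%nat) by lia.
  assert (T1 : 0 <= (1-s1)*(1-s2)*(1-s3)*O3 m i1 i2 i3).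
  { apply wO_nonneg; [repeat apply Rmult_le_pos; lra|right; apply O3_nonneg; lia]. }
  assert (T2 : 0 <= (1-s1)*(1-s2)*s3*O3 m i1 i2 (S i3)).
  { apply wO_nonneg; [repeat apply Rmult_le_pos; lra|right; apply O3_nonneg; lia]. }
  assert (T3 : 0 <= (1-s1)*s2*(1-s3)*O3 m i1 (S i2) i3).
  { apply wO_nonneg; [repeat apply Rmult_le_pos; lra|].
    destruct (Nat.eq_dec i2 i3) as [E|E]; [left; destruct (E23 E) as [-> _]; ring|].
    right; apply O3_nonneg; lia. }
  assert (T4 : 0 <= (1-s1)*s2*s3*O3 m i1 (S i2) (S i3)).
  { apply wO_nonneg; [repeat apply Rmult_le_pos; lra|right; apply O3_nonneg; lia]. }
  assert (T5 : 0 <= s1*(1-s2)*(1-s3)*O3 m (S i1) i2 i3).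
  { apply wO_nonneg; [repeat apply Rmult_le_pos; lra|].
    destruct (Nat.eq_dec i1 i2) as [E|E]; [left; destruct (E12 E) as [-> _]; ring|].
    right; apply O3_nonneg; lia. }
  assert (T6 : 0 <= s1*(1-s2)*s3*O3 m (S i1) i2 (S i3)).
  { apply wO_nonneg; [repeat apply Rmult_le_pos; lra|].
    destruct (Nat.eq_dec i1 i2) as [E|E]; [left; destruct (E12 E) as [-> _]; ring|].
    right; apply O3_nonneg; lia. }
  assert (T7 : 0 <= s1*s2*(1-s3)*O3 m (S i1) (S i2) i3).
  { apply wO_nonneg; [repeat apply Rmult_le_pos; lra|].
    destruct (Nat.eq_dec i2 i3) as [E|E]; [left; destruct (E23 E) as [-> _]; ring|].
    right; apply O3_nonneg; lia. }
  assert (T8 : 0 <= s1*s2*s3*O3 m (S i1) (S i2) (S i3)).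
  { apply wO_nonneg; [repeat apply Rmult_le_pos; lra|right; apply O3_nonneg; lia]. }
  destruct (Nat.eq_dec i1 i2) as [E1|E1].
  - destruct (E12 E1) as [Hs1 Hs2]. destruct (Nat.eq_dec i2 i3) as [E2|E2].
    { destruct (E23 E2); lra. }
    destruct (Nat.eq_dec i3 (S i1)) as [E3|E3].
    + assert (0 < s3) by (destruct (Rle_lt_or_eq_dec 0 s3 (proj1 S3)) as [h|h]; auto;
        exfalso; apply ND1; repeat split; auto).
      assert (0 < (1-s1)*s2*s3*O3 m i1 (S i2) (S i3)).
      { repeat apply Rmult_lt_0_compat; try lra. apply O3_pos; lia. }
      lra.
    + assert (0 < (1-s1)*s2*(1-s3)*O3 m i1 (S i2) i3).
      { repeat apply Rmult_lt_0_compat; try lra. apply O3_pos; lia. }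
      lra.
  - destruct (Nat.eq_dec i2 i3) as [E2|E2].
    + destruct (E23 E2) as [Hs2 Hs3].
      destruct (Nat.eq_dec i1 0) as [Z1|Z1]; [destruct (Nat.eq_dec (S i2) m) as [Z2|Z2]|].
      * assert (0 < s1) by (destruct (Rle_lt_or_eq_dec 0 s1 (proj1 S1)) as [h|h]; auto;
          exfalso; apply ND2; repeat split; auto).
        assert (0 < s1*(1-s2)*s3*O3 m (S i1) i2 (S i3)).
        { repeat apply Rmult_lt_0_compat; try lra. apply O3_pos; lia. }
        lra.
      * assert (0 < (1-s1)*(1-s2)*s3*O3 m i1 i2 (S i3)).
        { repeat apply Rmult_lt_0_compat; try lra. apply O3_pos; lia. }
        lra.
      * assert (0 < (1-s1)*(1-s2)*s3*O3 m i1 i2 (S i3)).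
        { repeat apply Rmult_lt_0_compat; try lra. apply O3_pos; lia. }
        lra.
    + assert (0 < (1-s1)*(1-s2)*(1-s3)*O3 m i1 i2 i3).
      { repeat apply Rmult_lt_0_compat; try lra. apply O3_pos; lia. }
      lra.
Qed.

Inductive bpt := BV (v : nat) | BE (e : nat) (s : R).
Definition bpoint m p := match p with BV v => vtx m v | BE e s => lerp (vtx m e) (vtx m (S e)) s end.
Definition bnode p : nat := match p with BV v => (2*v)%nat | BE e _ => (2*e+1)%nat end.
Definition bidx p : nat := match p with BV v => v | BE e _ => e end.
Definition bpar p : R := match p with BV _ => 0 | BE _ s => s end.
Definition bwf m p : Prop := match p with BV v => (v < m)%nat | BE e s => (e < m)%nat /\ 0 < s < 1 end.
Definition proper m p q : Prop := match p, q with
  | BV v, BE e _ => v <> e /\ v <> Nat.modulo (S e) m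
  | BE e _, BV v => v <> e /\ v <> Nat.modulo (S e) m
  | _, _ => False end.

Lemma bpoint_Lp m p : bpoint m p = Lp m (bidx p) (bpar p).
Proof. destruct p; simpl; unfold Lp; auto. destruct (vtx m v), (vtx m (S v)). unfold lerp; simpl. f_equal; ring. Qed.

Lemma bwf_bounds m p : bwf m p -> (bidx p < m)%nat /\ 0 <= bpar p < 1.
Proof. destruct p; simpl; intros; [split; [auto|lra]|]. destruct H; split; auto; lra. Qed.

Lemma node_order m X Y : bwf m X -> bwf m Y -> (bnode X < bnode Y)%nat ->
  (bidx X <= bidx Y)%nat /\ (bidx X = bidx Y -> bpar X = 0 /\ 0 < bpar Y).
Proof.
  destruct X as [v|e s], Y as [v'|e' s']; simpl; intros H1 H2 H3; split; try lia; intros; try lia.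
  split; [auto|]. destruct H2; lra.
Qed.

Lemma mod_S_small e m : (S e < m)%nat -> Nat.modulo (S e) m = S e.
Proof. intros; apply Nat.mod_small; auto. Qed.
Lemma mod_S_same e m : S e = m -> Nat.modulo (S e) m = 0%nat.
Proof. intros <-. apply Nat.Div0.mod_same. Qed.

Lemma sorted_pos m X Y Z : (3 <= m)%nat -> bwf m X -> bwf m Y -> bwf m Z ->
  (bnode X < bnode Y)%nat -> (bnode Y < bnode Z)%nat ->
  (proper m X Y \/ proper m Y Z \/ proper m X Z) ->
  0 < orient (bpoint m X) (bpoint m Y) (bpoint m Z).
Proof.
  intros Hm WX WY WZ NXY NYZ Pr.
  destruct (node_order m X Y WX WY NXY) as [L12 E12].
  destruct (node_order m Y Z WY WZ NYZ) as [L23 E23].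
  destruct (bwf_bounds m X WX) as [I1 S1]. destruct (bwf_bounds m Y WY) as [I2 S2].
  destruct (bwf_bounds m Z WZ) as [I3 S3].
  rewrite !bpoint_Lp. apply gen_pos; auto.
  - intros [A [B C]]. destruct X as [v1|e1 s1], Y as [v2|e2 s2], Z as [v3|e3 s3]; simpl in *;
      try lia; try (destruct WZ; lra).
    destruct Pr as [[P1 P2]|[[P1 P2]|[]]]; [lia|]. rewrite mod_S_small in P2 by lia. lia.
  - intros [A [B [C D]]]. destruct X as [v1|e1 s1], Y as [v2|e2 s2], Z as [v3|e3 s3]; simpl in *;
      try lia; try (destruct WX; lra).
    destruct Pr as [[]|[[P1 P2]|[P1 P2]]]; [lia|]. rewrite mod_S_same in P2 by lia. lia.
Qed.

Lemma orient_cyc P Q R0 : orient P Q R0 = orient Q R0 P.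
Proof. destruct P, Q, R0; unfold orient; simpl; ring. Qed.
Lemma orient_swap P Q R0 : orient P Q R0 = - orient P R0 Q.
Proof. destruct P, Q, R0; unfold orient; simpl; ring. Qed.

Lemma proper_sym m p q : proper m p q -> proper m q p.
Proof. destruct p, q; simpl; auto. Qed.

Lemma orient_pos m X Y Z : (3 <= m)%nat -> bwf m X -> bwf m Y -> bwf m Z ->
  btw (bnode X) (bnode Y) (bnode Z) -> proper m X Z ->
  0 < orient (bpoint m X) (bpoint m Y) (bpoint m Z).
Proof.
  intros Hm WX WY WZ B Pr. destruct B as [B|[B|B]].
  - apply sorted_pos; auto; lia.
  - rewrite orient_cyc. apply sorted_pos; auto; try lia.
    right; left; apply proper_sym; auto.
  - rewrite orient_cyc, orient_cyc. apply sorted_pos; auto; try lia.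
    left; apply proper_sym; auto.
Qed.

Lemma div_in01 a b : a * b > 0 -> 0 < a / (a + b) < 1 -> True.
Proof. auto. Qed.

Lemma frac01 o1 o2 : o1 * o2 < 0 -> o1 - o2 <> 0 /\ 0 <= o1 / (o1 - o2) <= 1.
Proof.
  intros H.
  destruct (Rlt_or_le 0 o1) as [Ho1|Ho1].
  - assert (o2 < 0) by nra. assert (0 < o1 - o2) by lra.
    split; [lra|]. split.
    + unfold Rdiv; apply Rmult_le_pos; [lra|left; apply Rinv_0_lt_compat; lra].
    + apply Rmult_le_reg_r with (o1 - o2); auto. unfold Rdiv. rewrite Rmult_assoc, Rinv_l by lra. lra.
  - assert (o1 < 0) by (destruct Ho1; auto; subst; lra). assert (0 < o2) by nra.
    assert (0 < o2 - o1) by lra.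
    replace (o1 / (o1 - o2)) with ((-o1) / (o2 - o1)) by (field; lra).
    split; [lra|]. split.
    + unfold Rdiv; apply Rmult_le_pos; [lra|left; apply Rinv_0_lt_compat; lra].
    + apply Rmult_le_reg_r with (o2 - o1); auto. unfold Rdiv. rewrite Rmult_assoc, Rinv_l by lra. lra.
Qed.

Lemma seg_inter P1 P2 Q1 Q2 :
  orient P1 P2 Q1 * orient P1 P2 Q2 < 0 -> orient Q1 Q2 P1 * orient Q1 Q2 P2 < 0 ->
  exists q, on_seg P1 P2 q /\ on_seg Q1 Q2 q.
Proof.
  intros H1 H2.
  destruct (frac01 _ _ H1) as [D1 F1]. destruct (frac01 _ _ H2) as [D2 F2].
  exists (lerp Q1 Q2 (orient P1 P2 Q1 / (orient P1 P2 Q1 - orient P1 P2 Q2))).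
  split.
  - exists (orient Q1 Q2 P1 / (orient Q1 Q2 P1 - orient Q1 Q2 P2)). split; auto.
    destruct P1 as [a b], P2 as [c d], Q1 as [e f], Q2 as [g h].
    revert D1 D2. unfold lerp, orient; simpl. intros D1 D2. f_equal; field; auto.
  - eexists; split; [exact F1|reflexivity].
Qed.

Definition chd (a : arrow) : nat*nat := ((2 * a_src a)%nat, (2 * a_edge a + 1)%nat).

Lemma arrows_intersect m a b : (3 <= m)%nat -> valid_arrow m a -> valid_arrow m b ->
  crossc (chd a) (chd b) -> intersects m (EArrow a) (EArrow b).
Proof.
  intros Hm [A1 [A2 [A3 [A4 A5]]]] [B1 [B2 [B3 [B4 B5]]]] Hx.
  set (X1 := BV (a_src a)). set (X2 := BE (a_edge a) (a_par a)).
  set (Y1 := BV (a_src b)). set (Y2 := BE (a_edge b) (a_par b)).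
  assert (W1 : bwf m X1) by (simpl; auto). assert (W2 : bwf m X2) by (simpl; auto).
  assert (W3 : bwf m Y1) by (simpl; auto). assert (W4 : bwf m Y2) by (simpl; auto).
  assert (PX : proper m X1 X2) by (simpl; auto). assert (PY : proper m Y1 Y2) by (simpl; auto).
  assert (PX' := proper_sym _ _ _ PX). assert (PY' := proper_sym _ _ _ PY).
  unfold chd, crossc in Hx; simpl in Hx.
  change (2 * a_src a)%nat with (bnode X1) in Hx. change (2 * a_edge a + 1)%nat with (bnode X2) in Hx.
  change (2 * a_src b)%nat with (bnode Y1) in Hx. change (2 * a_edge b + 1)%nat with (bnode Y2) in Hx.
  assert (Hne : a_src a <> a_src b).
  { intro E. unfold X1, Y1 in Hx; simpl in Hx. rewrite E in Hx. unfold btw in Hx; lia. }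
  assert (Hint : exists q, on_seg (bpoint m X1) (bpoint m X2) q /\ on_seg (bpoint m Y1) (bpoint m Y2) q).
  { apply seg_inter.
    - destruct Hx as [[H1 H2]|[H1 H2]].
      + pose proof (orient_pos m X1 Y1 X2 Hm W1 W3 W2 H1 PX).
        pose proof (orient_pos m X2 Y2 X1 Hm W2 W4 W1 H2 PX').
        rewrite (orient_swap (bpoint m X1) (bpoint m X2) (bpoint m Y1)).
        rewrite (orient_cyc (bpoint m X1) (bpoint m X2) (bpoint m Y2)). nra.
      + pose proof (orient_pos m X1 Y2 X2 Hm W1 W4 W2 H1 PX).
        pose proof (orient_pos m X2 Y1 X1 Hm W2 W3 W1 H2 PX').
        rewrite (orient_swap (bpoint m X1) (bpoint m X2) (bpoint m Y2)).
        rewrite (orient_cyc (bpoint m X1) (bpoint m X2) (bpoint m Y1)). nra.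
    - destruct Hx as [[H1 H2]|[H1 H2]].
      + assert (H3 : btw (bnode Y1) (bnode X2) (bnode Y2)) by (revert H1 H2; unfold X1, X2, Y1, Y2; simpl bnode; unfold btw; lia).
        assert (H4 : btw (bnode Y2) (bnode X1) (bnode Y1)) by (revert H1 H2; unfold X1, X2, Y1, Y2; simpl bnode; unfold btw; lia).
        pose proof (orient_pos m Y1 X2 Y2 Hm W3 W2 W4 H3 PY).
        pose proof (orient_pos m Y2 X1 Y1 Hm W4 W1 W3 H4 PY').
        rewrite (orient_cyc (bpoint m Y1) (bpoint m Y2) (bpoint m X1)).
        rewrite (orient_swap (bpoint m Y1) (bpoint m Y2) (bpoint m X2)). nra.
      + assert (H3 : btw (bnode Y2) (bnode X2) (bnode Y1)) by (revert H1 H2; unfold X1, X2, Y1, Y2; simpl bnode; unfold btw; lia).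
        assert (H4 : btw (bnode Y1) (bnode X1) (bnode Y2)) by (revert H1 H2; unfold X1, X2, Y1, Y2; simpl bnode; unfold btw; lia).
        pose proof (orient_pos m Y2 X2 Y1 Hm W4 W2 W3 H3 PY').
        pose proof (orient_pos m Y1 X1 Y2 Hm W3 W1 W4 H4 PY).
        rewrite (orient_cyc (bpoint m Y1) (bpoint m Y2) (bpoint m X2)).
        rewrite (orient_swap (bpoint m Y1) (bpoint m Y2) (bpoint m X1)). nra. }
  destruct Hint as [q [Q1 Q2]].
  exists q. split; [exact Q1|]. split; [exact Q2|].
  intros [k [_ [I1 [I2 _]]]]. simpl in I1, I2. congruence.
Qed.

Close Scope R_scope.

Lemma even_2k k : Nat.even (2*k) = true.
Proof. replace (2*k)%nat with (0 + 2*k)%nat by lia. rewrite Nat.even_add_mul_2. reflexivity. Qed.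
Lemma even_2k1 k : Nat.even (2*k+1) = false.
Proof. replace (2*k+1)%nat with (1 + 2*k)%nat by lia. rewrite Nat.even_add_mul_2. reflexivity. Qed.
Lemma even_S n : Nat.even (S n) = negb (Nat.even n).
Proof. rewrite Nat.even_succ, Nat.negb_even. reflexivity. Qed.

Lemma adj_seq m a b : (1 <= m)%nat -> (a < 2*m)%nat -> (b < 2*m)%nat -> adjc (seq 0 (2*m)) a b ->
  b = S a \/ a = S b \/ (a = 0 /\ b = 2*m-1)%nat \/ (b = 0 /\ a = 2*m-1)%nat.
Proof.
  intros Hm Ha Hb [Hab [P|P]].
  - assert (Q : forall z, (z < 2*m)%nat -> ~ btw a z b).
    { intros z Hz. apply P. apply in_seq. lia. }
    pose proof (Q 0%nat ltac:(lia)).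
    destruct (lt_dec (S a) (2*m)) as [h|h]; [pose proof (Q (S a) h)|]; unfold btw in *; lia.
  - assert (Q : forall z, (z < 2*m)%nat -> ~ btw b z a).
    { intros z Hz. apply P. apply in_seq. lia. }
    pose proof (Q 0%nat ltac:(lia)).
    destruct (lt_dec (S b) (2*m)) as [h|h]; [pose proof (Q (S b) h)|]; unfold btw in *; lia.
Qed.

Lemma lerp1 (P Q : point) : lerp P Q 1 = Q.
Proof. destruct P, Q; unfold lerp; simpl; f_equal; ring. Qed.

Lemma intersects_sym m x y : intersects m x y -> intersects m y x.
Proof.
  intros [q [H1 [H2 H3]]]. exists q. split; auto. split; auto.
  intros [k [A [B [C D]]]]. apply H3. exists k; auto.
Qed.

Lemma arrow_edge m a : valid_arrow m a -> intersects m (EEdge (a_edge a)) (EArrow a).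
Proof.
  intros [A1 [A2 [A3 [A4 A5]]]]. exists (arrow_end m a). split; [|split].
  - simpl. exists (a_par a). split; [lra|reflexivity].
  - simpl. exists 1%R. split; [lra|]. rewrite lerp1; auto.
  - intros [k [_ [I1 [I2 _]]]]. simpl in I1, I2. subst k. destruct I1; auto.
Qed.

Lemma chd_cross_neq a b : crossc (chd a) (chd b) -> a <> b.
Proof. intros H ->. unfold crossc, chd, btw in H; simpl in H. lia. Qed.

Lemma endpoint_fan m A p q : fan_crossing_free m A -> In p A -> In q A -> valid_arrow m p -> p <> q ->
  intersects m (EArrow p) (EArrow q) -> (a_src q = a_edge p \/ a_src q = Nat.modulo (S (a_edge p)) m) ->
  (a_src q < m)%nat -> False.
Proof.
  intros F Hp Hq Vp Hpq I Hinc Hk.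
  apply (F (EArrow p) (EEdge (a_edge p)) (EArrow q) (a_src q)); simpl; auto.
  all: try discriminate.
  all: try (intro H; inversion H; contradiction).
  all: try (destruct Vp as [_ [h _]]; exact h).
  all: try (destruct Hinc; auto; fail).
  all: try (apply intersects_sym, arrow_edge; auto).
Qed.

Lemma star_valid m A : (3 <= m)%nat -> is_star m A -> fan_crossing_free m A ->
  valid (seq 0 (2*m)) Nat.even (map chd A).
Proof.
  intros Hm [HF HN] F.
  rewrite Forall_forall in HF.
  assert (Hin : forall c, In c (map chd A) -> exists a, In a A /\ c = chd a).
  { intros c Hc. apply in_map_iff in Hc. destruct Hc as [a [<- Ha]]. eauto. }
  split; [apply seq_NoDup|].
  split.
  { intros a b Ha Hb Hadj. apply in_seq in Ha, Hb.
    destruct (adj_seq m a b ltac:(lia) ltac:(lia) ltac:(lia) Hadj) as [->|[->|[[-> ->]|[-> ->]]]].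
    - rewrite even_S. destruct (Nat.even a); discriminate.
    - rewrite even_S. destruct (Nat.even b); discriminate.
    - replace (2*m-1)%nat with (2*(m-1)+1)%nat by lia. rewrite even_2k1. discriminate.
    - replace (2*m-1)%nat with (2*(m-1)+1)%nat by lia. rewrite even_2k1. discriminate. }
  split.
  { intros v e Hve. destruct (Hin _ Hve) as [a [Ha Heq]]. unfold chd in Heq. inversion Heq; subst.
    destruct (HF a Ha) as [A1 [A2 [A3 [A4 A5]]]].
    split; [apply in_seq; lia|]. split; [apply in_seq; lia|].
    split; [apply even_2k|]. split; [apply even_2k1|].
    intro Hadj. destruct (adj_seq m (2*a_src a) (2*a_edge a+1) ltac:(lia) ltac:(lia) ltac:(lia) Hadj) as [E|[E|[[E1 E2]|[E1 E2]]]].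
    - lia.
    - apply A4. rewrite mod_S_small; lia.
    - apply A4. rewrite mod_S_same; lia.
    - lia. }
  split.
  { apply NoDup_map_NoDup_ForallPairs; auto. intros a b Ha Hb Heq.
    apply NNPP; intro Hne. unfold chd in Heq. inversion Heq.
    assert (Es : a_src a = a_src b) by lia. assert (Ee : a_edge a = a_edge b) by lia.
    apply (F (EEdge (a_edge a)) (EArrow a) (EArrow b) (a_src a)); simpl; auto.
    - destruct (HF a Ha) as [_ [h _]]; auto.
    - discriminate. - discriminate.
    - intro H; inversion H; auto.
    - destruct (HF a Ha) as [h _]; auto.
    - apply arrow_edge; auto.
    - rewrite Ee. apply arrow_edge; auto. }
  split.
  { intros c d Hc Hd a0 b0 Ha0 Hb0 Hadj Hx.
    destruct (Hin _ Hc) as [a [Ha ->]]. destruct (Hin _ Hd) as [b [Hb ->]].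
    pose proof (chd_cross_neq _ _ Hx) as Hab.
    destruct (HF a Ha) as [A1 [A2 [A3 [A4 A5]]]]. destruct (HF b Hb) as [B1 [B2 [B3 [B4 B5]]]].
    pose proof (arrows_intersect m a b Hm (HF a Ha) (HF b Hb) Hx) as Iab.
    pose proof (arrows_intersect m b a Hm (HF b Hb) (HF a Ha) (crossc_sym _ _ Hx)) as Iba.
    unfold chd in Ha0, Hb0; simpl in Ha0, Hb0.
    assert (Ra : (a0 < 2*m)%nat) by lia. assert (Rb : (b0 < 2*m)%nat) by lia.
    destruct (adj_seq m a0 b0 ltac:(lia) Ra Rb Hadj) as [E|[E|[[E1 E2]|[E1 E2]]]];
    destruct Ha0 as [->| ->]; destruct Hb0 as [->| ->]; try lia.
    all: first [ solve [apply (endpoint_fan m A b a F Hb Ha (HF b Hb) (not_eq_sym Hab) Iba);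
                   [ (left; lia) || (right; rewrite mod_S_small; lia) || (right; rewrite mod_S_same; lia) | auto ] ]
               | solve [apply (endpoint_fan m A a b F Ha Hb (HF a Ha) Hab Iab);
                   [ (left; lia) || (right; rewrite mod_S_small; lia) || (right; rewrite mod_S_same; lia) | auto ] ] ]. }
  intros c d1 d2 Hc Hd1 Hd2 Hne Hf Hx1 Hx2.
  destruct (Hin _ Hc) as [a [Ha ->]]. destruct (Hin _ Hd1) as [b1 [Hb1 ->]].
  destruct (Hin _ Hd2) as [b2 [Hb2 ->]].
  unfold chd in Hf; simpl in Hf.
  apply (F (EArrow a) (EArrow b1) (EArrow b2) (a_src b1)); simpl; auto.
  - intro H; inversion H; subst; apply (chd_cross_neq _ _ Hx1); auto.
  - intro H; inversion H; subst; apply (chd_cross_neq _ _ Hx2); auto.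
  - intro H; inversion H; subst; auto.
  - destruct (HF b1 Hb1) as [h _]; auto.
  - lia.
  - apply arrows_intersect; auto.
  - apply arrows_intersect; auto.
Qed.

Theorem upper_bound m A : (3 <= m)%nat -> is_star m A -> fan_crossing_free m A ->
  (length A + 5 <= 2 * m)%nat.
Proof.
  intros Hm S F. pose proof (star_valid m A Hm S F) as V.
  pose proof (comb_bound m _ _ _ V (length_seq _ _) Hm). rewrite length_map in H. auto.
Qed.

Open Scope R_scope.

Lemma orient_lerp3 P Q A B0 t : orient P Q (lerp A B0 t) = (1-t)*orient P Q A + t*orient P Q B0.
Proof. destruct P, Q, A, B0; unfold orient, lerp; simpl; ring. Qed.
Lemma orient_PQP P Q : orient P Q P = 0.
Proof. destruct P, Q; unfold orient; simpl; ring. Qed.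
Lemma orient_PQQ P Q : orient P Q Q = 0.
Proof. destruct P, Q; unfold orient; simpl; ring. Qed.
Lemma on_seg_orient P Q q : on_seg P Q q -> orient P Q q = 0.
Proof. intros [s [_ ->]]. rewrite orient_lerp3, orient_PQP, orient_PQQ. ring. Qed.
Lemma lerp0 P Q : lerp P Q 0 = P.
Proof. destruct P, Q; unfold lerp; simpl; f_equal; ring. Qed.

Lemma vtx33 : vtx 3 3 = vtx 3 0.
Proof.
  unfold vtx. replace (2 * PI * INR 3 / INR 3) with (2 * PI) by (simpl; field).
  replace (2 * PI * INR 0 / INR 3) with 0 by (simpl; field).
  rewrite cos_2PI, sin_2PI, cos_0, sin_0. reflexivity.
Qed.

Definition a0 : arrow := Arrow 0 1 (1/2).

Lemma o_pos : 0 < orient (vtx 3 0) (vtx 3 1) (vtx 3 2).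
Proof. apply (O3_pos 3 0 1 2); lia. Qed.


Lemma edges_disjoint i j : (i < 3)%nat -> (j < 3)%nat -> i <> j -> ~ intersects 3 (EEdge i) (EEdge j).
Proof.
  intros Hi Hj Hij [q [H1 [H2 H3]]]. simpl in H1, H2.
  pose proof o_pos as Ho.
  pose proof (orient_cyc (vtx 3 0) (vtx 3 1) (vtx 3 2)) as C1.
  pose proof (orient_cyc (vtx 3 1) (vtx 3 2) (vtx 3 0)) as C2.
  apply H3.
  pose proof (on_seg_orient _ _ _ H1) as O1.
  destruct H2 as [t [Ht ->]].
  rewrite orient_lerp3 in O1.
  assert (Hi' : (i = 0 \/ i = 1 \/ i = 2)%nat) by lia. assert (Hj' : (j = 0 \/ j = 1 \/ j = 2)%nat) by lia.
  destruct Hi' as [->|[->| ->]]; destruct Hj' as [->|[->| ->]]; try lia; simpl in *;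
    rewrite ?vtx33 in *; rewrite ?orient_PQP, ?orient_PQQ in O1.
  - assert (t = 0) by nra. subst t. exists 1%nat. rewrite lerp0. repeat split; auto.
  - assert (t = 1) by nra. subst t. exists 0%nat. rewrite lerp1. repeat split; auto.
  - assert (t = 1) by nra. subst t. exists 1%nat. rewrite lerp1. repeat split; auto.
  - assert (t = 0) by nra. subst t. exists 2%nat. rewrite lerp0. repeat split; auto.
  - assert (t = 0) by nra. subst t. exists 0%nat. rewrite lerp0. repeat split; auto.
  - assert (t = 1) by nra. subst t. exists 2%nat. rewrite lerp1. repeat split; auto.
Qed.

Lemma arrow_not_edge j : (j < 3)%nat -> j <> 1%nat -> ~ intersects 3 (EArrow a0) (EEdge j).
Proof.
  intros Hj Hj1 [q [H1 [H2 H3]]]. simpl in H1, H2.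
  pose proof o_pos as Ho.
  pose proof (orient_cyc (vtx 3 0) (vtx 3 1) (vtx 3 2)) as C1.
  pose proof (orient_cyc (vtx 3 1) (vtx 3 2) (vtx 3 0)) as C2.
  apply H3.
  pose proof (on_seg_orient _ _ _ H2) as O1.
  destruct H1 as [s [Hs ->]].
  unfold arrow_end, a0 in O1; simpl in O1.
  rewrite !orient_lerp3 in O1.
  assert (Hj' : (j = 0 \/ j = 2)%nat) by lia.
  destruct Hj' as [->| ->]; simpl in *; rewrite ?vtx33 in *; rewrite ?orient_PQP, ?orient_PQQ in O1.
  - assert (s = 0) by nra. subst s. exists 0%nat. rewrite lerp0. repeat split; auto.
  - assert (s = 0) by nra. subst s. exists 0%nat. rewrite lerp0. repeat split; auto.
Qed.

Lemma example_fcf : fan_crossing_free 3 [a0].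
Proof.
  intros x y z k Hx Hy Hz Hxy Hxz Hyz Hk Iy Iz Ixy Ixz.
  destruct x as [i|a].
  - simpl in Hx.
    assert (Ay : exists a, y = EArrow a /\ a = a0).
    { destruct y as [j|a]; simpl in Hy.
      - exfalso. apply (edges_disjoint i j); auto; intro; subst; auto.
      - exists a; split; auto. destruct Hy as [<-|[]]; auto. }
    assert (Az : exists a, z = EArrow a /\ a = a0).
    { destruct z as [j|a]; simpl in Hz.
      - exfalso. apply (edges_disjoint i j); auto; intro; subst; auto.
      - exists a; split; auto. destruct Hz as [<-|[]]; auto. }
    destruct Ay as [a [-> ->]]. destruct Az as [b [-> ->]]. auto.
  - simpl in Hx. destruct Hx as [<-|[]].
    assert (Ay : y = EEdge 1).
    { destruct y as [j|a]; simpl in Hy.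
      - destruct (Nat.eq_dec j 1) as [->|Hn]; auto. exfalso. apply (arrow_not_edge j); auto.
      - destruct Hy as [<-|[]]. congruence. }
    assert (Az : z = EEdge 1).
    { destruct z as [j|a]; simpl in Hz.
      - destruct (Nat.eq_dec j 1) as [->|Hn]; auto. exfalso. apply (arrow_not_edge j); auto.
      - destruct Hz as [<-|[]]. congruence. }
    subst. auto.
Qed.

Lemma example_star : is_star 3 [a0].
Proof.
  split.
  - constructor; [|constructor]. unfold valid_arrow, a0; simpl. repeat split; try lia; lra.
  - constructor; [simpl; auto|constructor].
Qed.

Close Scope R_scope.

Theorem lemma3 :
  (forall (m : nat) (A : list arrow),
      (3 <= m)%nat -> is_star m A -> fan_crossing_free m A ->
      (length A <= 3 * m - 8)%nat /\
      ((4 <= m)%nat -> (length A <= 3 * m - 9)%nat)) /\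
  (exists A : list arrow,
      is_star 3 A /\ fan_crossing_free 3 A /\ length A = (3 * 3 - 8)%nat).
Proof.
  split.
  - intros m A Hm HS HF. pose proof (upper_bound m A Hm HS HF). split; [lia|intros; lia].
  - exists [a0]. split; [apply example_star|]. split; [apply example_fcf|]. reflexivity.
Qed.
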